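(* There exists $k_0>0$ such that for every $k\ge k_0$ the following hold. (i) For every $\varepsilon\in(0,1)$ there exists a positive entire radial solution $u$ of the initial value problem $$\Delta^3u=-\frac{1}{u^3},\quad u(0)=k,\quad \Delta u(0)=-\varepsilon,\quad \Delta^2u(0)=1,\quad u'(0)=(\Delta u)'(0)=(\Delta^2u)'(0)=0. \tag{P}$$ (ii) If $u$ is a positive entire radial solution of (P) for some $\varepsilon\in\mathbb{R}$, then necessarily $\varepsilon\le\sqrt{6k/5}$, and $$k-\frac{\varepsilon}{6}r^2\le u(r)\le k-\frac{\varepsilon}{6}r^2+\frac{r^4}{120}\quad\text{for all } r\in(0,\infty).$$
   Context: A radial function on $\mathbb{R}^3$ is written $u(r)$, $r=|x|$; for radial functions $\Delta w=w''+\frac{2}{r}w'$. A positive entire radial solution of (P) is a radial function $u$ defined and positive on all of $\mathbb{R}^3$ (i.e. $r\in[0,\infty)$), smooth, solving the ODE with the stated initial conditions at $r=0$. *)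

(* Defs.v *)
From Stdlib Require Import Reals.
From Coquelicot Require Import Coquelicot.
Open Scope R_scope.

Definition smooth (f : R -> R) : Prop :=
  forall (n : nat) (x : R), ex_derive_n f n x.

(* Radial Laplacian on R^3 acting on the profile w(r), r = |x|:
   Delta w = w'' + (2/r) w' for r <> 0; at r = 0 its value (the value at the
   origin of the Laplacian of the smooth radial function) is 3 w''(0). *)
Definition lap (w : R -> R) (r : R) : R :=
  if Req_EM_T r 0 then 3 * Derive_n w 2 0
  else Derive_n w 2 r + 2 / r * Derive w r.

(* u is (the profile of) a positive entire radial solution of (P) with
   parameters k and eps.  A smooth radial function on R^3 is exactly one
   whose profile is an even smooth function on R. *)
Definition entire_radial_solution (k eps : R) (u : R -> R) : Prop :=
  smooth u /\
  (forall r, u (- r) = u r) /\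
  (forall r, 0 <= r -> 0 < u r) /\
  (forall r, 0 <= r -> lap (lap (lap u)) r = - / (u r ^ 3)) /\
  u 0 = k /\ lap u 0 = - eps /\ lap (lap u) 0 = 1 /\
  Derive u 0 = 0 /\ Derive (lap u) 0 = 0 /\ Derive (lap (lap u)) 0 = 0.

(* Main.v *)
Require Import Defs.
From Stdlib Require Import Reals Lra Psatz FunctionalExtensionality.
From Coquelicot Require Import Coquelicot.
Open Scope R_scope.

Lemma cont_ed (f : R -> R) x :
  (forall e, 0 < e -> exists d, 0 < d /\ forall y, Rabs (y - x) < d -> Rabs (f y - f x) < e) ->
  continuous f x.
Proof.
  intros H. apply continuity_pt_filterlim. intros e He.
  destruct (H e He) as [d [Hd H']]. exists d; split; auto.
  intros y [_ Hy]. apply H'. exact Hy.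
Qed.

Lemma ballR x d y : ball x d y <-> Rabs (y - x) < d.
Proof. reflexivity. Qed.

Lemma ball_normR x d y : ball_norm x d y <-> Rabs (y - x) < d.
Proof. reflexivity. Qed.

Lemma ex_derive_contR (f : R -> R) x : ex_derive f x -> continuous f x.
Proof. intros H. apply (@ex_derive_continuous R_AbsRing R_NormedModule f x H). Qed.

Definition Pw (j : nat) (g : R -> R) (x : R) : R :=
  RInt (fun s => s ^ j * g (x * s)) 0 1.

Lemma ex_RInt_cont01 (h : R -> R) a b :
  (forall s, continuous h s) -> ex_RInt h a b.
Proof. intros H. apply (@ex_RInt_continuous R_CompleteNormedModule). intros; apply H. Qed.

Lemma cont_Pw_integrand j (g : R -> R) x :
  (forall y, continuous g y) -> forall s, continuous (fun s => s ^ j * g (x * s)) s.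
Proof.
  intros Hg s. apply (continuous_mult (fun s => s ^ j) (fun s => g (x * s))).
  - apply continuity_pt_filterlim. apply derivable_continuous_pt. apply derivable_pt_pow.
  - apply (continuous_comp (fun s => x * s) g). 
    apply (continuous_mult (fun _ => x) (fun s => s)). apply continuous_const. apply continuous_id.
    apply Hg.
Qed.

Lemma RInt_minusR (f g : R -> R) a b : ex_RInt f a b -> ex_RInt g a b ->
  RInt (fun x => f x - g x) a b = RInt f a b - RInt g a b.
Proof. intros. apply (RInt_minus f g a b); auto. Qed.

Lemma RInt_plusR (f g : R -> R) a b : ex_RInt f a b -> ex_RInt g a b ->
  RInt (fun x => f x + g x) a b = RInt f a b + RInt g a b.
Proof. intros. apply (RInt_plus f g a b); auto. Qed.

Lemma RInt_scalR (f : R -> R) a b c : ex_RInt f a b ->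
  RInt (fun x => c * f x) a b = c * RInt f a b.
Proof. intros. apply (RInt_scal f a b c); auto. Qed.

Lemma RInt_constR a b c : RInt (fun _ => c) a b = (b - a) * c.
Proof. apply (RInt_const a b c). Qed.

Lemma pow_le1 s j : 0 <= s <= 1 -> s ^ j <= 1.
Proof. intros H. induction j; simpl. lra. assert (0 <= s ^ j) by (apply pow_le; lra). nra. Qed.

Lemma Pw_cont j g : (forall y, continuous g y) -> forall x, continuous (Pw j g) x.
Proof.
  intros Hg x0. apply cont_ed. intros e He.
  set (a := Rabs x0 + 1).
  assert (He2 : 0 < e / 2) by lra.
  destruct (unifcont_normed_1d g (-a) a (fun x _ => Hg x) (mkposreal _ He2)) as [d Hd].
  exists (Rmin 1 d). split. { apply Rmin_pos; [lra| apply cond_pos]. }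
  intros y Hy.
  assert (Hy1 : Rabs (y - x0) < 1) by (eapply Rlt_le_trans; [apply Hy| apply Rmin_l]).
  assert (Hyd : Rabs (y - x0) < d) by (eapply Rlt_le_trans; [apply Hy| apply Rmin_r]).
  unfold Pw.
  rewrite <- RInt_minusR by (apply ex_RInt_cont01, cont_Pw_integrand, Hg).
  eapply Rle_lt_trans.
  apply abs_RInt_le. lra.
  apply (@ex_RInt_continuous R_CompleteNormedModule). intros; apply (continuous_minus (fun s => s ^ j * g (y * s)) (fun s => s ^ j * g (x0 * s)));
    apply cont_Pw_integrand, Hg.
  eapply Rle_lt_trans. apply (RInt_le _ (fun _ => e / 2)). lra.
  apply (@ex_RInt_continuous R_CompleteNormedModule). intros.
  apply (continuous_comp _ Rabs). apply (continuous_minus (fun s => s ^ j * g (y * s)) (fun s => s ^ j * g (x0 * s)));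
    apply cont_Pw_integrand, Hg.
  apply continuity_pt_filterlim. apply Rcontinuity_abs.
  apply ex_RInt_const.
  intros s Hs.
  rewrite <- Rmult_minus_distr_l, Rabs_mult.
  assert (Hsj : Rabs (s ^ j) <= 1).
  { rewrite Rabs_right. apply pow_le1; lra. apply Rle_ge, pow_le; lra. }
  assert (Hx0a : Rabs x0 <= a) by (unfold a; lra).
  assert (Hya : Rabs y <= a).
  { unfold a. replace y with (x0 + (y - x0)) by ring. eapply Rle_trans. apply Rabs_triang. lra. }
  assert (H1 : Rabs (g (y * s) - g (x0 * s)) < e / 2).
  { assert (HH := Hd (x0 * s) (y * s)).
    simpl in HH. apply ball_normR in HH. exact HH.
    - apply Rabs_le_between; rewrite Rabs_mult, (Rabs_right s) by lra. assert (0 <= Rabs x0) by apply Rabs_pos. nra.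
    - apply Rabs_le_between; rewrite Rabs_mult, (Rabs_right s) by lra. assert (0 <= Rabs y) by apply Rabs_pos. nra.
    - apply ballR. rewrite <- Rmult_minus_distr_r, Rabs_mult, (Rabs_right s) by lra. assert (0 <= Rabs (y - x0)) by apply Rabs_pos. nra. }
  assert (0 <= Rabs (g (y * s) - g (x0 * s))) by apply Rabs_pos.
  nra.
  rewrite RInt_constR. lra.
Qed.

Lemma Pw_deriv j (g : R -> R) : (forall y, ex_derive g y) -> (forall y, continuous (Derive g) y) ->
  forall x, is_derive (Pw j g) x (Pw (S j) (Derive g) x).
Proof.
  intros Hd Hc x. unfold Pw.
  assert (HD : forall t u, is_derive (fun z => t ^ j * g (z * t)) u (t ^ (S j) * Derive g (u * t))).
  { intros t u. auto_derive. apply Hd. simpl. change (Derive (fun x0 => g x0)) with (Derive g). ring. }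
  replace (RInt (fun s : R => s ^ S j * Derive g (x * s)) 0 1)
   with (RInt (fun t => Derive (fun u => t ^ j * g (u * t)) x) 0 1).
  2:{ apply RInt_ext. intros t _. apply is_derive_unique, HD. }
  apply (is_derive_RInt_param (fun u t => t ^ j * g (u * t))).
  - apply filter_forall. intros y t _. eexists. apply HD.
  - intros t _. apply continuity_2d_pt_ext with (f := fun u v => v ^ S j * Derive g (u * v)).
    intros u v. symmetry. apply is_derive_unique, HD.
    apply continuity_2d_pt_mult.
    + apply continuity_1d_2d_pt_comp with (f := fun v => v ^ S j) (g := fun u v => v).
      apply derivable_continuous_pt, derivable_pt_pow. apply continuity_2d_pt_id2.
    + apply continuity_1d_2d_pt_comp with (f := Derive g) (g := fun u v => u * v).
      apply continuity_pt_filterlim, Hc.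
      apply continuity_2d_pt_mult. apply continuity_2d_pt_id1. apply continuity_2d_pt_id2.
  - apply filter_forall. intros y. apply ex_RInt_cont01. apply cont_Pw_integrand.
    intros z. apply ex_derive_contR, Hd.
Qed.

Fixpoint Cn (n : nat) (f : R -> R) : Prop :=
  match n with
  | O => forall x, continuous f x
  | S m => (forall x, ex_derive f x) /\ Cn m (Derive f)
  end.

Lemma Cn_cont n f : Cn n f -> forall x, continuous f x.
Proof. destruct n; simpl. auto. intros [H _] x. apply ex_derive_contR, H. Qed.

Lemma Cn_ext n : forall f g, (forall x, f x = g x) -> Cn n f -> Cn n g.
Proof.
  induction n; simpl; intros f g E H.
  - intros x. apply (continuous_ext f g x E), H.
  - destruct H as [H1 H2]. split.
    + intros x. apply (ex_derive_ext f g x E), H1.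
    + apply (IHn (Derive f)). intros x. apply Derive_ext, E. exact H2.
Qed.

Lemma Cn_S n : forall f, Cn (S n) f -> Cn n f.
Proof.
  induction n; intros f H.
  - simpl. intros x. apply (Cn_cont 1 f H).
  - destruct H as [H1 H2]. split. exact H1. apply IHn, H2.
Qed.

Lemma Cn_const n c : Cn n (fun _ => c).
Proof.
  revert c. induction n; simpl; intros c.
  - intros x. apply continuous_const.
  - split. intros x. apply ex_derive_const.
    apply Cn_ext with (f := fun _ => 0). intros x. rewrite Derive_const. reflexivity. apply IHn.
Qed.

Lemma Cn_plus n : forall f g, Cn n f -> Cn n g -> Cn n (fun x => f x + g x).
Proof.
  induction n; simpl; intros f g Hf Hg.
  - intros x. apply (continuous_plus f g x); auto.
  - destruct Hf as [F1 F2], Hg as [G1 G2]. split.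
    + intros x. apply (ex_derive_plus f g x); auto.
    + apply Cn_ext with (f := fun x => Derive f x + Derive g x).
      intros x. rewrite Derive_plus; auto. apply IHn; auto.
Qed.

Lemma Cn_mult n : forall f g, Cn n f -> Cn n g -> Cn n (fun x => f x * g x).
Proof.
  induction n; intros f g Hf Hg.
  - simpl in *. intros x. apply (continuous_mult f g x); auto.
  - assert (Hf' := Cn_S _ _ Hf). assert (Hg' := Cn_S _ _ Hg).
    destruct Hf as [F1 F2], Hg as [G1 G2]. split.
    + intros x. apply ex_derive_mult; auto.
    + apply Cn_ext with (f := fun x => Derive f x * g x + f x * Derive g x).
      intros x. rewrite Derive_mult; auto.
      apply Cn_plus; apply IHn; auto.
Qed.

Lemma Cn_id n : Cn n (fun x => x).
Proof.
  destruct n; simpl.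
  - intros x. apply continuous_id.
  - split. intros x. apply ex_derive_id.
    apply Cn_ext with (f := fun _ => 1). intros x. symmetry. apply (Derive_id x). apply Cn_const.
Qed.

Lemma Cn_inv n : forall f, Cn n f -> (forall x, f x <> 0) -> Cn n (fun x => / f x).
Proof.
  induction n; intros f Hf Hne.
  - simpl in *. intros x. apply continuity_pt_filterlim.
    apply continuity_pt_inv. apply continuity_pt_filterlim, Hf. apply Hne.
  - assert (Hf' := Cn_S _ _ Hf). destruct Hf as [F1 F2]. split.
    + intros x. apply ex_derive_inv; auto.
    + apply Cn_ext with (f := fun x => (-1) * (Derive f x * ((/ f x) * (/ f x)))).
      intros x. rewrite Derive_inv; auto. field. apply Hne.
      apply Cn_mult. apply Cn_const. apply Cn_mult. exact F2.
      apply Cn_mult; apply IHn; auto.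
Qed.

Lemma Cn_Pw n : forall j g, Cn n g -> Cn n (Pw j g).
Proof.
  induction n; intros j g Hg.
  - simpl in *. intros x. apply Pw_cont, Hg.
  - assert (Hg' := Cn_S _ _ Hg). destruct Hg as [G1 G2]. split.
    + intros x. eexists. apply Pw_deriv; auto. apply Cn_cont with n; auto.
    + apply Cn_ext with (f := Pw (S j) (Derive g)).
      intros x. symmetry. apply is_derive_unique, Pw_deriv; auto. apply Cn_cont with n; auto.
      apply IHn; auto.
Qed.

Lemma Derive_n_S f n t : Derive_n (Derive f) n t = Derive_n f (S n) t.
Proof.
  revert t. induction n; intros t; simpl. reflexivity.
  apply Derive_ext. intros; apply IHn.
Qed.

Lemma Cn_smooth f : (forall n, Cn n f) -> forall n x, ex_derive_n f n x.
Proof.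
  intros H n. destruct n. simpl; auto.
  revert f H. induction n; intros f H x.
  - simpl. apply (H 1%nat).
  - simpl. apply ex_derive_ext with (f := Derive_n (Derive f) n).
    intros t. apply Derive_n_S.
    apply (IHn (Derive f)). intros m. apply (H (S m)).
Qed.

Lemma smooth_Cn f : (forall n x, ex_derive_n f n x) -> forall n, Cn n f.
Proof.
  intros H n. revert f H. induction n; intros f H.
  - simpl. intros x. apply ex_derive_contR, (H 1%nat).
  - split. intros x. apply (H 1%nat).
    apply IHn. intros m x. destruct m. simpl; auto.
    simpl. apply ex_derive_ext with (f := Derive_n f (S m)).
    intros t. symmetry. apply Derive_n_S.
    apply (H (S (S m))).
Qed.

Lemma RInt_correctR (f : R -> R) a b : ex_RInt f a b -> is_RInt f a b (RInt f a b).
Proof. intros H. apply (@RInt_correct R_CompleteNormedModule), H. Qed.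

Lemma cont_to_ed (f : R -> R) x : continuous f x ->
  forall e, 0 < e -> exists d, 0 < d /\ forall y, Rabs (y - x) < d -> Rabs (f y - f x) < e.
Proof.
  intros H e He. apply continuity_pt_filterlim in H.
  destruct (H e He) as [d [Hd H']]. exists d; split; auto.
  intros y Hy. destruct (Req_dec y x) as [->|Hne].
  - unfold Rminus; rewrite Rplus_opp_r, Rabs_R0; auto.
  - apply (H' y). split. split. exact I. auto. exact Hy.
Qed.

Lemma RInt_FTC (f F : R -> R) a b :
  (forall x, is_derive F x (f x)) -> (forall x, continuous f x) ->
  RInt f a b = F b - F a.
Proof.
  intros H1 H2. apply is_RInt_unique.
  apply (is_RInt_derive F f a b). intros; apply H1. intros; apply H2.
Qed.

Lemma RInt_extR (f g : R -> R) a b :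
  (forall x : R, Rmin a b < x < Rmax a b -> f x = g x) -> RInt f a b = RInt g a b.
Proof. intros H. apply RInt_ext. exact H. Qed.


Definition B (g : R -> R) (t : R) : R := t * Pw 2 g t.
Definition Q (g : R -> R) (r : R) : R := RInt (B g) 0 r.

Definition contR (g : R -> R) := forall x, continuous g x.

Lemma B_cont g : contR g -> contR (B g).
Proof. intros H x. unfold B. apply (continuous_mult (fun t => t) (Pw 2 g)). apply continuous_id. apply Pw_cont, H. Qed.

Lemma ex_RInt_B g a b : contR g -> ex_RInt (B g) a b.
Proof. intros H. apply ex_RInt_cont01, B_cont, H. Qed.

Lemma Q_deriv g r : contR g -> is_derive (Q g) r (B g r).
Proof.
  intros H. apply (is_derive_RInt (B g) (Q g) 0 r).
  apply filter_forall. intros b. apply RInt_correctR, ex_RInt_B, H.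
  apply B_cont, H.
Qed.

Lemma cQ_deriv g c r : contR g -> is_derive (fun x => c + Q g x) r (B g r).
Proof.
  intros H. assert (HQ := Q_deriv g r H). auto_derive. eexists; exact HQ.
  change (fun x : R => Q g x) with (Q g). rewrite (is_derive_unique _ _ _ HQ). ring.
Qed.

Lemma Cn_B n g : Cn n g -> Cn n (B g).
Proof. intros H. apply Cn_mult. apply Cn_id. apply Cn_Pw, H. Qed.

Lemma Cn_cQ n g c : Cn n g -> Cn (S n) (fun x => c + Q g x).
Proof.
  intros H. assert (Hc : contR g) by (intros x; apply (Cn_cont n g H)).
  split. intros x. eexists. apply cQ_deriv, Hc.
  apply Cn_ext with (f := B g). intros x. symmetry. apply is_derive_unique, cQ_deriv, Hc.
  apply Cn_B, H.
Qed.

Lemma Pw_at0 j g : Pw j g 0 = g 0 / INR (S j).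
Proof.
  unfold Pw. rewrite (RInt_ext _ (fun s => s ^ j * g 0)).
  2:{ intros x _. rewrite Rmult_0_l. reflexivity. }
  assert (HN : INR (S j) <> 0) by (apply not_0_INR; lia).
  assert (HN' : INR (S j) = INR j + 1) by (rewrite S_INR; ring).
  set (N := INR (S j)) in *.
  apply is_RInt_unique.
  replace (g 0 / N) with (minus (g 0 * 1 ^ (S j) / N) (g 0 * 0 ^ (S j) / N)).
  2:{ unfold minus, plus, opp; simpl. rewrite pow1. rewrite !Rmult_0_l, Rmult_0_r. unfold Rdiv. rewrite Rmult_0_l, Ropp_0, Rplus_0_r, Rmult_1_l. rewrite Rmult_1_r. reflexivity. }
  apply (is_RInt_derive (fun s => g 0 * s ^ (S j) / N)).
  - intros x _. auto_derive. auto. change (match j with 0%nat => 1 | S _ => INR j + 1 end) with (INR (S j)). rewrite HN', S_INR. field. rewrite <- HN'. exact HN.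
  - intros x _. apply continuity_pt_filterlim.
    apply continuity_pt_mult. apply derivable_continuous_pt, derivable_pt_pow. apply continuity_pt_const. intros a b; reflexivity.
Qed.

Lemma B_deriv0 g : contR g -> is_derive (B g) 0 (g 0 / 3).
Proof.
  intros H. apply is_derive_Reals. intros e He.
  destruct (cont_to_ed (Pw 2 g) 0 (Pw_cont 2 g H 0) e He) as [d [Hd H']].
  exists (mkposreal d Hd). intros h Hh Hhd. simpl in Hhd.
  unfold B. rewrite Rplus_0_l, Rmult_0_l, Rminus_0_r.
  replace (h * Pw 2 g h / h) with (Pw 2 g h) by (field; auto).
  replace (g 0 / 3) with (Pw 2 g 0).
  apply H'. rewrite Rminus_0_r. exact Hhd.
  rewrite Pw_at0. f_equal. simpl. ring.
Qed.

Lemma B_tform g r : contR g -> r <> 0 ->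
  B g r = / r ^ 2 * RInt (fun s => s ^ 2 * g s) 0 r.
Proof.
  intros H Hr.
  assert (E := RInt_comp_lin (fun s => s ^ 2 * g s) r 0 0 1).
  rewrite !Rmult_0_r, Rmult_1_r, !Rplus_0_r in E.
  rewrite <- E.
  2:{ apply ex_RInt_cont01. intros s. apply (cont_Pw_integrand 2 g 1 H) || idtac.
      apply (continuous_ext (fun s => s ^ 2 * g (1 * s))). intros; rewrite Rmult_1_l; auto.
      apply cont_Pw_integrand, H. }
  unfold B, Pw. rewrite (RInt_ext (fun y => scal r ((r * y + 0) ^ 2 * g (r * y + 0))) (fun y => r ^ 3 * (y ^ 2 * g (r * y)))).
  2:{ intros x _. rewrite Rplus_0_r. unfold scal; simpl; unfold mult; simpl. ring. }
  rewrite RInt_scalR. field. auto.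
  apply ex_RInt_cont01, cont_Pw_integrand, H.
Qed.

Lemma locally_nz r : r <> 0 -> locally r (fun y => y <> 0).
Proof.
  intros Hr. assert (Hp : 0 < Rabs r) by (apply Rabs_pos_lt; auto).
  exists (mkposreal _ Hp). intros y Hy. apply ballR in Hy. simpl in Hy.
  intros ->. assert (Hy' : Rabs (0 - r) < Rabs r) by exact Hy. replace (0 - r) with (-r) in Hy' by ring. rewrite Rabs_Ropp in Hy'. lra.
Qed.

Lemma cont_s2g g : contR g -> contR (fun s => s ^ 2 * g s).
Proof.
  intros H s. apply (continuous_ext (fun s => s ^ 2 * g (1 * s))). intros; rewrite Rmult_1_l; auto.
  apply cont_Pw_integrand, H.
Qed.

Lemma B_deriv_nz g r : contR g -> r <> 0 -> is_derive (B g) r (g r - 2 / r * B g r).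
Proof.
  intros H Hr.
  set (G := fun y => RInt (fun s => s ^ 2 * g s) 0 y).
  assert (HG : forall y, is_derive G y (y ^ 2 * g y)).
  { intros y. apply (is_derive_RInt (fun s => s ^ 2 * g s) G 0 y).
    apply filter_forall. intros b. apply RInt_correctR, ex_RInt_cont01, cont_s2g, H.
    apply cont_s2g, H. }
  apply is_derive_ext_loc with (f := fun y => / y ^ 2 * G y).
  - eapply filter_imp. 2: apply locally_nz, Hr. intros y Hy. simpl. rewrite B_tform; auto.
  - rewrite B_tform; auto. change (RInt (fun s : R => s ^ 2 * g s) 0 r) with (G r).
    assert (E : is_derive (fun y => / y ^ 2 * G y) r (- (2 * r) / r ^ 4 * G r + / r ^ 2 * (r ^ 2 * g r))).
    { auto_derive. split. rewrite Rmult_1_r. apply Rmult_integral_contrapositive; auto. split; auto. eexists; apply HG.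
      change (fun x : R => G x) with G. rewrite (is_derive_unique _ _ _ (HG r)). field. auto. }
    replace (g r - 2 / r * (/ r ^ 2 * G r)) with (- (2 * r) / r ^ 4 * G r + / r ^ 2 * (r ^ 2 * g r)).
    exact E. field. auto.
Qed.

Lemma Derive_cQ g c x : contR g -> Derive (fun r => c + Q g r) x = B g x.
Proof. intros H. apply is_derive_unique, cQ_deriv, H. Qed.

Lemma Derive2_cQ g c x : contR g -> Derive_n (fun r => c + Q g r) 2 x = Derive (B g) x.
Proof.
  intros H. simpl. apply Derive_ext. intros t. apply Derive_cQ, H.
Qed.

Lemma lap_cQ g c r : contR g -> lap (fun x => c + Q g x) r = g r.
Proof.
  intros H. unfold lap. destruct (Req_EM_T r 0) as [->|Hr].
  - rewrite Derive2_cQ by auto. rewrite (is_derive_unique _ _ _ (B_deriv0 g H)). field.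
  - rewrite Derive2_cQ by auto. rewrite (is_derive_unique _ _ _ (B_deriv_nz g r H Hr)).
    rewrite Derive_cQ by auto. field. auto.
Qed.

Lemma lap_cQ_fun g c : contR g -> lap (fun x => c + Q g x) = g.
Proof. intros H. apply functional_extensionality. intros r. apply lap_cQ, H. Qed.

Lemma Q_0 g : Q g 0 = 0.
Proof. unfold Q. apply (@RInt_point R_CompleteNormedModule). Qed.

Lemma B_0 g : B g 0 = 0.
Proof. unfold B. ring. Qed.

Lemma Pw_plus j f g x : contR f -> contR g -> Pw j (fun t => f t + g t) x = Pw j f x + Pw j g x.
Proof.
  intros Hf Hg. unfold Pw. rewrite <- RInt_plusR. apply RInt_extR. intros; ring.
  apply ex_RInt_cont01, cont_Pw_integrand, Hf. apply ex_RInt_cont01, cont_Pw_integrand, Hg.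
Qed.

Lemma Pw_scal j f c x : contR f -> Pw j (fun t => c * f t) x = c * Pw j f x.
Proof.
  intros Hf. unfold Pw. rewrite <- RInt_scalR. apply RInt_extR. intros; ring.
  apply ex_RInt_cont01, cont_Pw_integrand, Hf.
Qed.

Lemma contR_plus f g : contR f -> contR g -> contR (fun t => f t + g t).
Proof. intros Hf Hg x. apply (continuous_plus f g x); auto. Qed.
Lemma contR_scal f c : contR f -> contR (fun t => c * f t).
Proof. intros Hf x. apply (continuous_mult (fun _ => c) f x); auto. apply continuous_const. Qed.
Lemma contR_const c : contR (fun _ => c).
Proof. intros x. apply continuous_const. Qed.
Lemma contR_id : contR (fun t => t).
Proof. intros x. apply continuous_id. Qed.
Lemma contR_mult f g : contR f -> contR g -> contR (fun t => f t * g t).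
Proof. intros Hf Hg x. apply (continuous_mult f g x); auto. Qed.
Lemma contR_Q g : contR g -> contR (Q g).
Proof. intros H x. apply ex_derive_contR. eexists. apply Q_deriv, H. Qed.
Lemma contR_cQ g c : contR g -> contR (fun x => c + Q g x).
Proof. intros H. apply contR_plus. apply contR_const. apply contR_Q, H. Qed.

Lemma Q_plus f g r : contR f -> contR g -> Q (fun t => f t + g t) r = Q f r + Q g r.
Proof.
  intros Hf Hg. unfold Q. rewrite <- RInt_plusR by (apply ex_RInt_B; auto).
  apply RInt_extR. intros x _. unfold B. rewrite Pw_plus; auto. ring.
Qed.

Lemma Q_scal f c r : contR f -> Q (fun t => c * f t) r = c * Q f r.
Proof.
  intros Hf. unfold Q. rewrite <- RInt_scalR by (apply ex_RInt_B; auto).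
  apply RInt_extR. intros x _. unfold B. rewrite Pw_scal; auto. ring.
Qed.



Lemma Q_minus f g r : contR f -> contR g -> Q (fun t => f t - g t) r = Q f r - Q g r.
Proof.
  intros Hf Hg.
  replace (fun t => f t - g t) with (fun t => f t + (-1) * g t) by (apply functional_extensionality; intros; ring).
  rewrite Q_plus, Q_scal; auto. ring. apply contR_scal, Hg.
Qed.

Lemma Pw_le j f g x : 0 <= x -> contR f -> contR g ->
  (forall t, 0 <= t <= x -> f t <= g t) -> Pw j f x <= Pw j g x.
Proof.
  intros Hx Hf Hg H. unfold Pw. apply RInt_le. lra.
  apply ex_RInt_cont01, cont_Pw_integrand, Hf. apply ex_RInt_cont01, cont_Pw_integrand, Hg.
  intros s Hs. apply Rmult_le_compat_l. apply pow_le; lra. apply H. split; nra.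
Qed.

Lemma Q_le f g r : 0 <= r -> contR f -> contR g ->
  (forall t, 0 <= t <= r -> f t <= g t) -> Q f r <= Q g r.
Proof.
  intros Hr Hf Hg H. unfold Q. apply RInt_le. auto. apply ex_RInt_B; auto. apply ex_RInt_B; auto.
  intros t Ht. unfold B. apply Rmult_le_compat_l. lra. apply Pw_le; auto. lra.
  intros s Hs. apply H. lra.
Qed.

Lemma Q_neg g r : contR g -> Q g (- r) = Q (fun t => g (- t)) r.
Proof.
  intros H. unfold Q.
  assert (E := RInt_comp_lin (B g) (-1) 0 0 r).
  replace (-1 * 0 + 0) with 0 in E by ring. replace (-1 * r + 0) with (- r) in E by ring.
  rewrite <- E by (apply ex_RInt_B; auto).
  apply RInt_extR. intros x _. rewrite Rplus_0_r. unfold B, Pw.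
  change (scal (-1) ?Y) with ((-1) * Y).
  replace (RInt (fun s : R => s ^ 2 * g (-1 * x * s)) 0 1) with (RInt (fun s : R => s ^ 2 * g (- (x * s))) 0 1).
  ring. apply RInt_extR. intros; f_equal; f_equal; ring.
Qed.



Lemma contR_deriv f : (forall x, ex_derive f x) -> contR f.
Proof. intros H x. apply ex_derive_contR, H. Qed.

Lemma Pw2_poly a b x : Pw 2 (fun t => a + b * t ^ 2) x = a / 3 + b * x ^ 2 / 5.
Proof.
  unfold Pw. rewrite (RInt_FTC _ (fun s => a * s ^ 3 / 3 + b * x ^ 2 * s ^ 5 / 5)).
  field. intros s. auto_derive. auto. field.
  apply contR_deriv. intros s. auto_derive. auto.
Qed.

Lemma Q_poly a b r : Q (fun t => a + b * t ^ 2) r = a * r ^ 2 / 6 + b * r ^ 4 / 20.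
Proof.
  unfold Q. rewrite (RInt_extR _ (fun t => a * t / 3 + b * t ^ 3 / 5)).
  2:{ intros x _. unfold B. rewrite Pw2_poly. field. }
  rewrite (RInt_FTC _ (fun t => a * t ^ 2 / 6 + b * t ^ 4 / 20)).
  field. intros s. auto_derive. auto. field.
  apply contR_deriv. intros s. auto_derive. auto.
Qed.

Lemma Q_ext f g r : (forall t, f t = g t) -> Q f r = Q g r.
Proof. intros H. replace g with f. reflexivity. apply functional_extensionality, H. Qed.

Lemma Q_const c r : Q (fun _ => c) r = c * r ^ 2 / 6.
Proof.
  rewrite (Q_ext _ (fun t => c + 0 * t ^ 2)). rewrite Q_poly. field.
  intros t. ring.
Qed.

Lemma Q_abs_le g h r : 0 <= r -> contR g -> contR h ->
  (forall t, 0 <= t <= r -> Rabs (g t) <= h t) -> Rabs (Q g r) <= Q h r.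
Proof.
  intros Hr Hg Hh H. apply Rabs_le. split.
  - replace (- Q h r) with (Q (fun t => -1 * h t) r) by (rewrite Q_scal; auto; ring).
    apply Q_le; auto. apply contR_scal, Hh. intros t Ht. specialize (H t Ht).
    apply Rabs_le_between in H. lra.
  - apply Q_le; auto. intros t Ht. specialize (H t Ht). apply Rabs_le_between in H. lra.
Qed.

Lemma contR_exp2 M : contR (fun t => M * exp (t ^ 2)).
Proof. apply contR_deriv. intros s. auto_derive. auto. Qed.

Lemma exp_le x y : x <= y -> exp x <= exp y.
Proof. intros [H|H]. left; apply exp_increasing, H. subst; lra. Qed.

Lemma contR_poly a b : contR (fun t => a + b * t ^ 2).
Proof. apply contR_deriv. intros s. auto_derive. auto. Qed.

Lemma Q_exp_pos M r : 0 <= M -> 0 <= r -> Q (fun t => M * exp (t ^ 2)) r <= M * exp (r ^ 2) / 6.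
Proof.
  intros HM Hr. unfold Q.
  apply Rle_trans with (RInt (fun t => t * (M * exp (t ^ 2) / 3)) 0 r).
  - apply RInt_le; auto. apply ex_RInt_B, contR_exp2.
    apply ex_RInt_cont01. apply contR_deriv. intros s. auto_derive. auto.
    intros t Ht. unfold B. apply Rmult_le_compat_l. lra.
    replace (M * exp (t ^ 2) / 3) with (Pw 2 (fun t0 => M * exp (t ^ 2) + 0 * t0 ^ 2) t)
      by (rewrite Pw2_poly; field).
    unfold Pw. apply RInt_le. lra.
    apply ex_RInt_cont01, (cont_Pw_integrand 2 (fun t => M * exp (t ^ 2)) t (contR_exp2 M)).
    apply ex_RInt_cont01, (cont_Pw_integrand 2 _ t (contR_poly _ _)).
    intros s Hs. apply Rmult_le_compat_l. apply pow_le; lra.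
    rewrite Rmult_0_l, Rplus_0_r. apply Rmult_le_compat_l; auto.
    apply exp_le. assert (t * s <= t) by nra. assert (0 <= t * s) by nra.
    rewrite (Rmult_comm t s). nra.
  - rewrite (RInt_FTC _ (fun t => M * exp (t ^ 2) / 6)).
    simpl. rewrite Rmult_0_l, exp_0. assert (0 <= M * 1 / 6) by lra. lra.
    intros s. auto_derive. auto. replace (s * (s * 1)) with (s ^ 2) by ring. field.
    apply contR_deriv. intros s. auto_derive. auto.
Qed.

Lemma contR_opp g : contR g -> contR (fun t => g (- t)).
Proof.
  intros H x. apply (continuous_comp (fun t => - t) g). 
  apply ex_derive_contR. auto_derive. auto. apply H.
Qed.

Lemma Q_exp_bound g M r : contR g -> 0 <= M ->
  (forall t, Rabs (g t) <= M * exp (t ^ 2)) -> Rabs (Q g r) <= M * exp (r ^ 2) / 6.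
Proof.
  intros Hg HM H.
  assert (Hpos : forall g r, contR g -> 0 <= r -> (forall t, Rabs (g t) <= M * exp (t ^ 2)) ->
     Rabs (Q g r) <= M * exp (r ^ 2) / 6).
  { intros g' r' Hg' Hr' H'. eapply Rle_trans. apply Q_abs_le with (h := fun t => M * exp (t ^ 2)); auto.
    apply contR_exp2. apply Q_exp_pos; auto. }
  destruct (Rle_dec 0 r). apply Hpos; auto.
  replace r with (- - r) by ring. rewrite Q_neg by auto.
  replace ((- - r) ^ 2) with ((- r) ^ 2) by ring.
  apply Hpos. apply contR_opp, Hg. lra.
  intros t. replace (t ^ 2) with ((- t) ^ 2) by ring. apply H.
Qed.

Definition pl (t : R) : R := / ((1 + t ^ 2) ^ 2 * sqrt (1 + t ^ 2)).

Lemma sq_pos t : 0 < 1 + t ^ 2.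
Proof. assert (0 <= t ^ 2) by (apply pow2_ge_0). lra. Qed.

Lemma sqrt_pos1 t : 0 < sqrt (1 + t ^ 2).
Proof. apply sqrt_lt_R0, sq_pos. Qed.

Lemma pl_deriv : forall x, ex_derive pl x.
Proof.
  intros x. unfold pl. auto_derive. 
  assert (H1 := sq_pos x). assert (H2 := sqrt_pos1 x).
  replace (x * (x * 1)) with (x ^ 2) by ring. split. lra. split; auto. apply Rgt_not_eq. apply Rmult_lt_0_compat; [nra|lra].
Qed.

Lemma contR_pl : contR pl.
Proof. apply contR_deriv, pl_deriv. Qed.

Lemma Pw2_pl x : Pw 2 (fun t => 3 * pl t) x = / ((1 + x ^ 2) * sqrt (1 + x ^ 2)).
Proof.
  unfold Pw. rewrite (RInt_FTC _ (fun s => s ^ 3 * / ((1 + (x * s) ^ 2) * sqrt (1 + (x * s) ^ 2)))).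
  - rewrite Rmult_1_r. simpl. ring.
  - intros s. assert (H1 := sq_pos (x * s)). assert (H2 := sqrt_pos1 (x * s)).
    auto_derive.
    + replace (x * s * (x * s * 1)) with ((x * s) ^ 2) by ring. split. lra. split; auto.
      apply Rgt_not_eq. nra.
    + unfold pl. replace (x * s * (x * s * 1)) with ((x * s) ^ 2) by ring.
      set (q := sqrt (1 + (x * s) ^ 2)) in *.
      assert (Hq : q * q = 1 + (x * s) ^ 2) by (apply sqrt_sqrt; lra).
      rewrite <- Hq. assert (Hq0 : q <> 0) by lra. field_simplify; auto. replace (-3 * s ^ 4 * q * x ^ 2 + 3 * s ^ 2 * q ^ 3) with (3 * s ^ 2 * q * (q * q - (x * s) ^ 2)) by ring. rewrite Hq. field. auto.
  - apply contR_mult. apply contR_deriv; intros; auto_derive; auto.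
    intros s. apply (continuous_comp (fun s => x * s) (fun t => 3 * pl t)).
    apply ex_derive_contR. auto_derive. auto. apply contR_scal, contR_pl.
Qed.

Lemma Q_pl r : Q (fun t => 3 * pl t) r = 1 - / sqrt (1 + r ^ 2).
Proof.
  unfold Q. rewrite (RInt_extR _ (fun t => t * / ((1 + t ^ 2) * sqrt (1 + t ^ 2)))).
  2:{ intros x _. unfold B. rewrite Pw2_pl. reflexivity. }
  rewrite (RInt_FTC _ (fun t => - / sqrt (1 + t ^ 2))).
  - simpl. rewrite Rmult_0_l, Rplus_0_r, sqrt_1. field.
    assert (H := sqrt_pos1 r). simpl in H. lra.
  - intros s. assert (H1 := sq_pos s). assert (H2 := sqrt_pos1 s).
    auto_derive.
    + replace (s * (s * 1)) with (s ^ 2) by ring. split. lra. split; auto. lra.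
    + replace (s * (s * 1)) with (s ^ 2) by ring.
      set (q := sqrt (1 + s ^ 2)) in *.
      assert (Hq : q * q = 1 + s ^ 2) by (apply sqrt_sqrt; lra).
      rewrite <- Hq. field. lra.
  - apply contR_mult. apply contR_id. apply contR_deriv. intros s.
    assert (H1 := sq_pos s). assert (H2 := sqrt_pos1 s).
    auto_derive. replace (s * (s * 1)) with (s ^ 2) by ring. split. lra. split; auto.
    apply Rgt_not_eq. nra.
Qed.

Lemma Q_pl_le r : Q (fun t => 3 * pl t) r <= 1.
Proof.
  rewrite Q_pl. assert (H := sqrt_pos1 r). assert (0 < / sqrt (1 + r ^ 2)) by (apply Rinv_0_lt_compat; auto). lra.
Qed.

Lemma pl_pos t : 0 < pl t.
Proof. unfold pl. apply Rinv_0_lt_compat. assert (H1 := sq_pos t). assert (H2 := sqrt_pos1 t). apply Rmult_lt_0_compat; nra. Qed.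


Definition smoothC (f : R -> R) := forall n, Cn n f.

Lemma smoothC_D f : smoothC f -> smoothC (Derive f).
Proof. intros H n. apply (H (S n)). Qed.

Lemma smoothC_ex f : smoothC f -> forall x, ex_derive f x.
Proof. intros H x. apply (H 1%nat). Qed.

Lemma smoothC_cont f : smoothC f -> contR f.
Proof. intros H x. apply (Cn_cont 0 f (H 0%nat)). Qed.

Lemma smoothC_plus f g : smoothC f -> smoothC g -> smoothC (fun x => f x + g x).
Proof. intros Hf Hg n. apply Cn_plus; auto. Qed.

Lemma smoothC_scal f c : smoothC f -> smoothC (fun x => c * f x).
Proof. intros Hf n. apply Cn_mult; auto. apply Cn_const. Qed.

Lemma smoothC_Pw j f : smoothC f -> smoothC (Pw j f).
Proof. intros Hf n. apply Cn_Pw; auto. Qed.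

Lemma smoothC_ext f g : (forall x, f x = g x) -> smoothC f -> smoothC g.
Proof. intros E Hf n. apply Cn_ext with f; auto. Qed.

Lemma lap_form f : smoothC f -> Derive f 0 = 0 ->
  forall r, lap f r = Derive (Derive f) r + 2 * Pw 0 (Derive (Derive f)) r.
Proof.
  intros Hf H0 r.
  assert (E2 : forall x, Derive_n f 2 x = Derive (Derive f) x).
  { intros x. simpl. apply Derive_ext. reflexivity. }
  assert (Hc2 : contR (Derive (Derive f))) by (apply smoothC_cont, smoothC_D, smoothC_D, Hf).
  unfold lap. destruct (Req_EM_T r 0) as [->|Hr].
  - rewrite E2, Pw_at0. simpl. field.
  - rewrite E2. f_equal.
    assert (E := RInt_comp_lin (Derive (Derive f)) r 0 0 1).
    rewrite !Rmult_0_r, Rmult_1_r, !Rplus_0_r in E.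
    rewrite RInt_Derive in E.
    2:{ intros; apply smoothC_ex, smoothC_D, Hf. }
    2:{ intros x _. apply Hc2. }
    rewrite H0, Rminus_0_r in E.
    rewrite <- E. 2: apply ex_RInt_cont01, Hc2.
    unfold Pw. rewrite (RInt_extR (fun y => scal r (Derive (Derive f) (r * y + 0)))
       (fun y => r * (y ^ 0 * Derive (Derive f) (r * y)))).
    2:{ intros x _. rewrite Rplus_0_r. simpl. unfold scal; simpl; unfold mult; simpl. ring. }
    rewrite RInt_scalR. field. auto.
    apply ex_RInt_cont01. apply (cont_Pw_integrand 0 _ r Hc2).
Qed.

Lemma smoothC_lap f : smoothC f -> Derive f 0 = 0 -> smoothC (lap f).
Proof.
  intros Hf H0. apply smoothC_ext with (f := fun r => Derive (Derive f) r + 2 * Pw 0 (Derive (Derive f)) r).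
  intros r. symmetry. apply lap_form; auto.
  apply smoothC_plus. apply smoothC_D, smoothC_D, Hf. apply smoothC_scal, smoothC_Pw, smoothC_D, smoothC_D, Hf.
Qed.

Lemma rep f : smoothC f -> Derive f 0 = 0 -> forall r, f r = f 0 + Q (lap f) r.
Proof.
  intros Hf H0 r.
  assert (Hl := smoothC_lap f Hf H0).
  assert (Hlc : contR (lap f)) by (apply smoothC_cont, Hl).
  assert (HD : forall t, Derive f t = B (lap f) t).
  { intros t. destruct (Req_dec t 0) as [->|Ht].
    - rewrite B_0. auto.
    - rewrite B_tform; auto.
      rewrite (RInt_FTC _ (fun s => s ^ 2 * Derive f s)).
      + simpl. field. auto.
      + intros s. 
        assert (Hd : is_derive (fun s => s ^ 2 * Derive f s) s (2 * s * Derive f s + s ^ 2 * Derive (Derive f) s)).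
        { auto_derive. apply smoothC_ex, smoothC_D, Hf. change (fun x : R => Derive f x) with (Derive f). ring. }
        replace (s ^ 2 * lap f s) with (2 * s * Derive f s + s ^ 2 * Derive (Derive f) s). exact Hd.
        unfold lap. destruct (Req_EM_T s 0) as [->|Hs]. ring.
        replace (Derive_n f 2 s) with (Derive (Derive f) s) by (simpl; apply Derive_ext; reflexivity).
        field. auto.
      + apply cont_s2g, Hlc. }
  unfold Q. rewrite <- (RInt_extR (Derive f)). 2: intros; apply HD.
  rewrite RInt_Derive. ring.
  intros; apply smoothC_ex, Hf.
  intros; apply smoothC_cont, smoothC_D, Hf.
Qed.

Lemma RInt_ChaslesR (f : R -> R) a b c : ex_RInt f a b -> ex_RInt f b c ->
  RInt f a b + RInt f b c = RInt f a c.
Proof. intros. apply (RInt_Chasles f a b c); auto. Qed.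



Lemma Q_mono_neg Z a b : contR Z -> 0 <= a <= b -> (forall t, 0 <= t -> Z t <= 0) -> Q Z b <= Q Z a.
Proof.
  intros HZ Hab HZn. unfold Q. rewrite <- (RInt_ChaslesR (B Z) 0 a b) by (apply ex_RInt_B; auto).
  assert (RInt (B Z) a b <= 0).
  { apply Rle_trans with (RInt (fun _ => 0) a b). 2:{ rewrite RInt_constR. lra. }
    apply RInt_le. lra. apply ex_RInt_B; auto. apply ex_RInt_const.
    intros s Hs. unfold B. 
    assert (Pw 2 Z s <= 0).
    { apply Rle_trans with (Pw 2 (fun t => 0 + 0 * t ^ 2) s).
      apply Pw_le. lra. auto. apply contR_poly. intros t Ht. rewrite Rmult_0_l, Rplus_0_l. apply HZn. lra.
      rewrite Pw2_poly. lra. }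
    nra. }
  lra.
Qed.

Lemma pl_mono t r : 0 <= t <= r -> pl r <= pl t.
Proof.
  intros H. unfold pl. apply Rinv_le_contravar.
  apply Rmult_lt_0_compat. assert (H1 := sq_pos t). nra. apply sqrt_pos1.
  assert (t ^ 2 <= r ^ 2) by nra.
  apply Rmult_le_compat. assert (H1 := sq_pos t). nra. left; apply sqrt_pos1.
  assert (H1 := sq_pos t). nra. apply sqrt_le_1_alt. lra.
Qed.

Lemma arith1 k C1 d X v : 0 < d -> 1 <= X -> d * X / 120 >= Rabs C1 / 3 + 2 * Rabs k ->
  v <= k + C1 * X / 6 + - d / 6 * (X * X) / 20 -> 0 < v -> False.
Proof.
  intros Hd HX H1 H2 H3.
  assert (C1 <= Rabs C1) by apply Rle_abs. assert (k <= Rabs k) by apply Rle_abs.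
  assert (0 <= Rabs C1) by apply Rabs_pos. assert (0 <= Rabs k) by apply Rabs_pos.
  assert (C1 * X <= Rabs C1 * X) by (apply Rmult_le_compat_r; lra).
  assert (Rabs k * 1 <= Rabs k * X) by (apply Rmult_le_compat_l; lra).
  assert (X * (d * X / 120) >= X * (Rabs C1 / 3 + 2 * Rabs k)) by (apply Rle_ge, Rmult_le_compat_l; lra).
  nra.
Qed.

Lemma part2 k eps u : entire_radial_solution k eps u ->
  eps <= sqrt (6 * k / 5) /\
  forall r : R, 0 < r -> k - eps / 6 * r ^ 2 <= u r /\ u r <= k - eps / 6 * r ^ 2 + r ^ 4 / 120.
Proof.
  intros [Hs [Hev [Hpos [Heq [H0 [Hl0 [Hll0 [Hd0 [Hdl0 Hdll0]]]]]]]]].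
  assert (Hu : smoothC u) by (intros n; apply smooth_Cn, Hs).
  assert (HV : smoothC (lap u)) by (apply smoothC_lap; auto).
  assert (HW : smoothC (lap (lap u))) by (apply smoothC_lap; auto).
  assert (HZ : smoothC (lap (lap (lap u)))) by (apply smoothC_lap; auto).
  set (V := lap u) in *. set (W := lap V) in *. set (Z := lap W) in *.
  assert (ru : forall r, u r = k + Q V r) by (intros r; rewrite <- H0; apply rep; auto).
  assert (rV : forall r, V r = - eps + Q W r) by (intros r; rewrite <- Hl0; apply rep; auto).
  assert (rW : forall r, W r = 1 + Q Z r) by (intros r; rewrite <- Hll0; apply rep; auto).
  assert (cV := smoothC_cont _ HV). assert (cW := smoothC_cont _ HW). assert (cZ := smoothC_cont _ HZ).
  assert (HZn : forall t, 0 <= t -> Z t <= 0).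
  { intros t Ht. unfold Z, W, V. rewrite Heq by auto. assert (Hu0 := Hpos t Ht).
    assert (0 < / u t ^ 3) by (apply Rinv_0_lt_compat; apply pow_lt; auto). lra. }
  assert (W1 : forall r, 0 <= r -> W r <= 1).
  { intros r Hr. rewrite rW. assert (Q Z r <= Q (fun _ => 0) r).
    { apply Q_le; auto. apply contR_const. intros; apply HZn; lra. }
    rewrite Q_const in H. lra. }
  assert (Vup : forall r, 0 <= r -> V r <= - eps + r ^ 2 / 6).
  { intros r Hr. rewrite rV. assert (Q W r <= Q (fun _ => 1) r).
    { apply Q_le; auto. apply contR_const. intros; apply W1; lra. }
    rewrite Q_const in H. lra. }
  assert (uup : forall r, 0 <= r -> u r <= k - eps / 6 * r ^ 2 + r ^ 4 / 120).
  { intros r Hr. rewrite ru. assert (Q V r <= Q (fun t => - eps + / 6 * t ^ 2) r).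
    { apply Q_le; auto. apply contR_poly. intros t Ht. specialize (Vup t (proj1 Ht)). lra. }
    rewrite Q_poly in H. lra. }
  assert (W0 : forall r, 0 <= r -> 0 <= W r).
  { intros r1 Hr1. destruct (Rle_dec 0 (W r1)) as [|Hneg]; auto. exfalso.
    set (d := - W r1). assert (Hd : 0 < d) by (unfold d; lra).
    assert (Wmono : forall t, r1 <= t -> W t <= - d).
    { intros t Ht. unfold d. rewrite !rW. assert (Q Z t <= Q Z r1) by (apply Q_mono_neg; auto; lra). lra. }
    set (K := (1 + d) / pl r1).
    assert (HK : 0 < K) by (unfold K; apply Rdiv_lt_0_compat; [lra| apply pl_pos]).
    assert (Wb : forall t, 0 <= t -> W t <= - d + K / 3 * (3 * pl t)).
    { intros t Ht. destruct (Rle_dec t r1).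
      - assert (pl r1 <= pl t) by (apply pl_mono; lra).
        assert (K * pl r1 = 1 + d) by (unfold K; field; apply Rgt_not_eq, pl_pos).
        assert (K * pl r1 <= K * pl t) by (apply Rmult_le_compat_l; lra).
        specialize (W1 t Ht). lra.
      - specialize (Wmono t ltac:(lra)). assert (0 < pl t) by apply pl_pos. nra. }
    assert (Vb : forall r, 0 <= r -> V r <= (K / 3 - eps) + (- d / 6) * r ^ 2).
    { intros r Hr. rewrite rV.
      assert (Q W r <= Q (fun t => - d + K / 3 * (3 * pl t)) r).
      { apply Q_le; auto. apply contR_plus. apply contR_const. apply contR_scal, contR_scal, contR_pl.
        intros; apply Wb; lra. }
      rewrite Q_plus, Q_const, Q_scal in H.
      assert (Q (fun t => 3 * pl t) r <= 1) by apply Q_pl_le. nra.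
      apply contR_scal, contR_pl. apply contR_const. apply contR_scal, contR_scal, contR_pl. }
    set (C1 := K / 3 - eps).
    assert (ub : forall r, 0 <= r -> u r <= k + C1 * r ^ 2 / 6 + (- d / 6) * r ^ 4 / 20).
    { intros r Hr. rewrite ru. assert (Q V r <= Q (fun t => C1 + (- d / 6) * t ^ 2) r).
      { apply Q_le; auto. apply contR_poly. intros t Ht. apply Vb. lra. }
      rewrite Q_poly in H. lra. }
    set (X := (40 * (Rabs C1 + 1) + 240 * Rabs k) / d + 1).
    assert (HX1 : 1 <= X).
    { unfold X. assert (0 <= (40 * (Rabs C1 + 1) + 240 * Rabs k) / d).
      apply Rdiv_le_0_compat. assert (0 <= Rabs C1) by apply Rabs_pos. assert (0 <= Rabs k) by apply Rabs_pos. lra. lra. lra. }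
    assert (HdX : d * X / 120 >= Rabs C1 / 3 + 2 * Rabs k).
    { assert (E : d * X = (40 * (Rabs C1 + 1) + 240 * Rabs k) + d) by (unfold X; field; lra).
      replace (d * X / 120) with (((40 * (Rabs C1 + 1) + 240 * Rabs k) + d) / 120) by (rewrite <- E; field).
      lra. }
    set (r := sqrt X).
    assert (Hr2 : r ^ 2 = X) by (unfold r; simpl; rewrite Rmult_1_r; apply sqrt_sqrt; lra).
    assert (Hr0 : 0 <= r) by (unfold r; apply sqrt_pos).
    specialize (ub r Hr0). specialize (Hpos r Hr0).
    replace (r ^ 4) with (X * X) in ub by (rewrite <- Hr2; ring). rewrite Hr2 in ub.
    assert (C1 <= Rabs C1) by apply Rle_abs. assert (k <= Rabs k) by apply Rle_abs.
    assert (0 <= Rabs C1) by apply Rabs_pos.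
    assert (d * X * X / 120 >= X * (Rabs C1 / 3 + 2 * Rabs k)).
    { replace (d * X * X / 120) with (X * (d * X / 120)) by field. apply Rle_ge, Rmult_le_compat_l; lra. }
    eapply arith1 with (d := d) (X := X) (C1 := C1) (k := k); eauto. }
  split.
  - destruct (Rle_dec eps 0). { assert (0 <= sqrt (6 * k / 5)) by apply sqrt_pos. lra. }
    set (r := sqrt (10 * eps)).
    assert (Hr2 : r ^ 2 = 10 * eps) by (unfold r; simpl; rewrite Rmult_1_r; apply sqrt_sqrt; lra).
    assert (Hr0 : 0 <= r) by (unfold r; apply sqrt_pos).
    specialize (uup r Hr0). specialize (Hpos r Hr0).
    replace (r ^ 4) with ((10 * eps) * (10 * eps)) in uup by (rewrite <- Hr2; ring). rewrite Hr2 in uup.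
    assert (Hk : eps * eps <= 6 * k / 5) by nra.
    rewrite <- (sqrt_square eps) by lra. apply sqrt_le_1_alt. lra.
  - intros r Hr. split; [| apply uup; lra].
    rewrite ru. assert (Q (fun t => - eps + 0 * t ^ 2) r <= Q V r).
    { apply Q_le; auto. lra. apply contR_poly. intros t Ht. rewrite rV.
      assert (Q (fun _ => 0) t <= Q W t). { apply Q_le; auto. lra. apply contR_const. intros; apply W0; lra. }
      rewrite Q_const in H. lra. }
    rewrite Q_poly in H. lra.
Qed.


Lemma inv3_lip a b c : 0 < c -> c <= a -> c <= b ->
  Rabs (/ a ^ 3 - / b ^ 3) <= 3 * (/ c) ^ 4 * Rabs (a - b).
Proof.
  intros Hc Ha Hb.
  assert (Hp : 0 < / a <= / c) by (split; [apply Rinv_0_lt_compat; lra| apply Rinv_le_contravar; lra]).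
  assert (Hq : 0 < / b <= / c) by (split; [apply Rinv_0_lt_compat; lra| apply Rinv_le_contravar; lra]).
  set (p := / a) in *. set (q := / b) in *. set (w := / c) in *.
  assert (E : / a ^ 3 - / b ^ 3 = (b - a) * (p * q * (p * p + p * q + q * q))).
  { unfold p, q. field. lra. }
  rewrite E, Rabs_mult. replace (b - a) with (- (a - b)) by ring. rewrite Rabs_Ropp.
  rewrite (Rabs_right (p * q * (p * p + p * q + q * q))) by (apply Rle_ge; apply Rmult_le_pos; nra).
  rewrite (Rmult_comm (3 * w ^ 4)). apply Rmult_le_compat_l. apply Rabs_pos.
  assert (p * q <= w * w) by nra. assert (p * p <= w * w) by nra. assert (q * q <= w * w) by nra.
  assert (0 <= p * q) by nra.
  assert (p * q * (p * p + p * q + q * q) <= w * w * (w * w + w * w + w * w)).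
  { apply Rmult_le_compat; nra. }
  simpl. nra.
Qed.

Lemma Rmax_form a b : Rmax a b = (a + b + Rabs (a - b)) / 2.
Proof.
  unfold Rmax. destruct (Rle_dec a b).
  rewrite Rabs_left1 by lra. field. rewrite Rabs_right by lra. field.
Qed.

Lemma Rmax_lip a b c : Rabs (Rmax a c - Rmax b c) <= Rabs (a - b).
Proof.
  assert (H1 : a - b <= Rabs (a - b)) by apply Rle_abs.
  assert (H2 : b - a <= Rabs (a - b)) by (rewrite <- Rabs_Ropp; replace (- (a - b)) with (b - a) by ring; apply Rle_abs).
  apply Rabs_le_between.
  unfold Rmax. destruct (Rle_dec a c), (Rle_dec b c); lra.
Qed.

Definition m (k t : R) : R := k / 2 + t ^ 4 / 480.
Definition Ft (k : R) (u : R -> R) (t : R) : R := - / (Rmax (u t) (m k t)) ^ 3.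
Definition Wf k u : R -> R := fun s => 1 + Q (Ft k u) s.
Definition Vf k eps u : R -> R := fun t => - eps + Q (Wf k u) t.
Definition T k eps u : R -> R := fun r => k + Q (Vf k eps u) r.

Lemma m_pos k t : 0 < k -> 0 < m k t.
Proof. intros Hk. unfold m. assert (0 <= t ^ 4) by (replace (t ^ 4) with ((t ^ 2) ^ 2) by ring; apply pow2_ge_0). lra. Qed.

Lemma contR_pt f : (forall x, continuity_pt f x) -> contR f.
Proof. intros H x. apply continuity_pt_filterlim, H. Qed.
Lemma pt_contR f : contR f -> forall x, continuity_pt f x.
Proof. intros H x. apply continuity_pt_filterlim, H. Qed.

Lemma contR_m k : contR (m k).
Proof. apply contR_deriv. intros x. unfold m. auto_derive. auto. Qed.

Lemma contR_Rmax f g : contR f -> contR g -> contR (fun t => Rmax (f t) (g t)).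
Proof.
  intros Hf Hg. apply contR_pt. intros x.
  apply continuity_pt_ext with (f := fun t => (f t + g t + Rabs (f t - g t)) / 2).
  intros; rewrite Rmax_form; auto.
  apply continuity_pt_mult. 2: apply continuity_pt_const; intros a b; reflexivity.
  apply continuity_pt_plus. apply continuity_pt_plus; apply pt_contR; auto.
  apply (continuity_pt_comp (fun t => f t - g t) Rabs).
  apply continuity_pt_minus; apply pt_contR; auto. apply Rcontinuity_abs.
Qed.

Lemma Rmax_ge_m k u t : m k t <= Rmax (u t) (m k t).
Proof. apply Rmax_r. Qed.

Lemma contR_Ft k u : 0 < k -> contR u -> contR (Ft k u).
Proof.
  intros Hk Hu. apply contR_pt. intros x. unfold Ft.
  apply continuity_pt_opp. apply continuity_pt_inv.
  apply (continuity_pt_comp (fun t => Rmax (u t) (m k t)) (fun y => y ^ 3)).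
  apply pt_contR, contR_Rmax; auto. apply contR_m.
  apply derivable_continuous_pt, derivable_pt_pow.
  apply pow_nonzero. assert (H := m_pos k x Hk). assert (H' := Rmax_ge_m k u x). lra.
Qed.

Lemma Ft_bound k u t : 0 < k -> Rabs (Ft k u t) <= / (m k t) ^ 3.
Proof.
  intros Hk. unfold Ft. assert (H := m_pos k t Hk). assert (H' := Rmax_ge_m k u t).
  rewrite Rabs_Ropp, Rabs_right. apply Rinv_le_contravar. apply pow_lt; auto.
  apply pow_incr; lra.
  apply Rle_ge, Rlt_le, Rinv_0_lt_compat, pow_lt; lra.
Qed.

Lemma Ft_neg k u t : 0 < k -> Ft k u t < 0.
Proof.
  intros Hk. unfold Ft. assert (H := m_pos k t Hk). assert (H' := Rmax_ge_m k u t).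
  assert (0 < / Rmax (u t) (m k t) ^ 3) by (apply Rinv_0_lt_compat, pow_lt; lra). lra.
Qed.

Lemma Ft_lip k u v t : 0 < k -> Rabs (Ft k u t - Ft k v t) <= 3 * (/ (k / 2)) ^ 4 * Rabs (u t - v t).
Proof.
  intros Hk. unfold Ft.
  replace (- / Rmax (u t) (m k t) ^ 3 - - / Rmax (v t) (m k t) ^ 3)
    with (- (/ Rmax (u t) (m k t) ^ 3 - / Rmax (v t) (m k t) ^ 3)) by ring.
  rewrite Rabs_Ropp. eapply Rle_trans. apply inv3_lip with (c := k / 2). lra.
  - assert (H' := Rmax_ge_m k u t). unfold m in *. assert (0 <= t ^ 4) by (replace (t ^ 4) with ((t ^ 2) ^ 2) by ring; apply pow2_ge_0). lra.
  - assert (H' := Rmax_ge_m k v t). unfold m in *. assert (0 <= t ^ 4) by (replace (t ^ 4) with ((t ^ 2) ^ 2) by ring; apply pow2_ge_0). lra.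
  - apply Rmult_le_compat_l. assert (0 < / (k/2)) by (apply Rinv_0_lt_compat; lra). assert (0 < (/ (k/2)) ^ 4) by (apply pow_lt; lra). lra.
    apply Rmax_lip.
Qed.

Lemma contR_Wf k u : 0 < k -> contR u -> contR (Wf k u).
Proof. intros. apply contR_cQ, contR_Ft; auto. Qed.
Lemma contR_Vf k eps u : 0 < k -> contR u -> contR (Vf k eps u).
Proof. intros. apply contR_cQ, contR_Wf; auto. Qed.
Lemma contR_T k eps u : 0 < k -> contR u -> contR (T k eps u).
Proof. intros. apply contR_cQ, contR_Vf; auto. Qed.

Lemma contR_minus f g : contR f -> contR g -> contR (fun t => f t - g t).
Proof. intros Hf Hg x. apply (continuous_minus f g x); auto. Qed.

Lemma exp_pos2 t : 0 < exp (t ^ 2).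
Proof. apply exp_pos. Qed.

Lemma T_lip k eps u v M : 2 <= k -> contR u -> contR v -> 0 <= M ->
  (forall t, Rabs (u t - v t) <= M * exp (t ^ 2)) ->
  forall r, Rabs (T k eps u r - T k eps v r) <= M * exp (r ^ 2) / 2.
Proof.
  intros Hk Hu Hv HM H r.
  set (L := 3 * (/ (k / 2)) ^ 4).
  assert (HL : 0 <= L <= 3).
  { unfold L. assert (0 < / (k/2) <= 1).
    { split. apply Rinv_0_lt_compat; lra. rewrite <- Rinv_1. apply Rinv_le_contravar; lra. }
    assert (0 <= (/ (k/2)) ^ 4 <= 1). split. apply pow_le; lra. apply pow_le1; lra. lra. }
  assert (Hk0 : 0 < k) by lra.
  assert (S1 : forall t, Rabs (Ft k u t - Ft k v t) <= (L * M) * exp (t ^ 2)).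
  { intros t. eapply Rle_trans. apply Ft_lip; auto. fold L. rewrite (Rmult_assoc L M). apply Rmult_le_compat_l. lra. apply H. }
  assert (S2 : forall t, Rabs (Wf k u t - Wf k v t) <= (L * M / 6) * exp (t ^ 2)).
  { intros t. unfold Wf. replace (1 + Q (Ft k u) t - (1 + Q (Ft k v) t)) with (Q (Ft k u) t - Q (Ft k v) t) by ring.
    rewrite <- Q_minus by (apply contR_Ft; auto).
    replace (L * M / 6 * exp (t ^ 2)) with ((L * M) * exp (t ^ 2) / 6) by field.
    apply Q_exp_bound. apply contR_minus; apply contR_Ft; auto. nra. auto. }
  assert (S3 : forall t, Rabs (Vf k eps u t - Vf k eps v t) <= (L * M / 36) * exp (t ^ 2)).
  { intros t. unfold Vf. replace (- eps + Q (Wf k u) t - (- eps + Q (Wf k v) t)) with (Q (Wf k u) t - Q (Wf k v) t) by ring.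
    rewrite <- Q_minus by (apply contR_Wf; auto).
    replace (L * M / 36 * exp (t ^ 2)) with ((L * M / 6) * exp (t ^ 2) / 6) by field.
    apply Q_exp_bound. apply contR_minus; apply contR_Wf; auto. nra. auto. }
  unfold T. replace (k + Q (Vf k eps u) r - (k + Q (Vf k eps v) r)) with (Q (Vf k eps u) r - Q (Vf k eps v) r) by ring.
  rewrite <- Q_minus by (apply contR_Vf; auto).
  eapply Rle_trans. apply Q_exp_bound with (M := L * M / 36).
  apply contR_minus; apply contR_Vf; auto. nra. auto.
  assert (0 < exp (r ^ 2)) by apply exp_pos. 
  assert (L * M / 36 <= 3 * M / 36) by nra. nra.
Qed.

Lemma exp_ge1 t : 1 <= exp (t ^ 2).
Proof. assert (H := exp_ineq1_le (t ^ 2)). assert (0 <= t ^ 2) by apply pow2_ge_0. lra. Qed.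

Lemma T_bound k eps u : 2 <= k -> 0 < eps < 1 -> contR u ->
  forall r, Rabs (T k eps u r - k) <= exp (r ^ 2).
Proof.
  intros Hk He Hu r. assert (Hk0 : 0 < k) by lra.
  assert (S0 : forall t, Rabs (Ft k u t) <= 1 * exp (t ^ 2)).
  { intros t. eapply Rle_trans. apply Ft_bound; auto.
    assert (k / 2 <= m k t) by (unfold m; assert (0 <= t ^ 4) by (replace (t ^ 4) with ((t ^ 2) ^ 2) by ring; apply pow2_ge_0); lra).
    assert (/ m k t ^ 3 <= 1).
    { rewrite <- Rinv_1. apply Rinv_le_contravar. lra. replace 1 with (1 ^ 3) by ring. apply pow_incr. lra. }
    assert (H1 := exp_ge1 t). lra. }
  assert (S1 : forall t, Rabs (Wf k u t) <= 2 * exp (t ^ 2)).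
  { intros t. unfold Wf. eapply Rle_trans. apply Rabs_triang. rewrite Rabs_R1.
    assert (Rabs (Q (Ft k u) t) <= 1 * exp (t ^ 2) / 6) by (apply Q_exp_bound; auto; [apply contR_Ft; auto| lra]).
    assert (H1 := exp_ge1 t). lra. }
  assert (S2 : forall t, Rabs (Vf k eps u t) <= 2 * exp (t ^ 2)).
  { intros t. unfold Vf. eapply Rle_trans. apply Rabs_triang. rewrite Rabs_Ropp, Rabs_right by lra.
    assert (Rabs (Q (Wf k u) t) <= 2 * exp (t ^ 2) / 6) by (apply Q_exp_bound; auto; [apply contR_Wf; auto| lra]).
    assert (H1 := exp_ge1 t). lra. }
  unfold T. replace (k + Q (Vf k eps u) r - k) with (Q (Vf k eps u) r) by ring.
  eapply Rle_trans. apply Q_exp_bound with (M := 2); auto. apply contR_Vf; auto. lra.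
  assert (H1 := exp_ge1 r). lra.
Qed.

Fixpoint it k eps (n : nat) : R -> R :=
  match n with O => fun _ => k | S n => T k eps (it k eps n) end.

Section Iter.
Variables k eps : R.
Hypothesis Hk : 2 <= k.
Hypothesis He : 0 < eps < 1.

Lemma it_cont n : contR (it k eps n).
Proof. induction n; simpl. apply contR_const. apply contR_T; auto. lra. Qed.

Lemma it_step n : forall r, Rabs (it k eps (S n) r - it k eps n r) <= (/ 2) ^ n * exp (r ^ 2).
Proof.
  induction n; intros r.
  - simpl. rewrite Rmult_1_l. apply T_bound; auto. apply contR_const.
  - change (it k eps (S (S n))) with (T k eps (it k eps (S n))).
    change (it k eps (S n)) with (T k eps (it k eps n)) at 2.
    eapply Rle_trans. apply T_lip with (M := (/ 2) ^ n); auto. apply it_cont. apply it_cont.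
    apply pow_le; lra. simpl. lra.
Qed.

Lemma it_cauchy n p r : Rabs (it k eps (n + p) r - it k eps n r) <= 2 * (/ 2) ^ n * (1 - (/ 2) ^ p) * exp (r ^ 2).
Proof.
  induction p.
  - rewrite Nat.add_0_r. unfold Rminus. rewrite Rplus_opp_r, Rabs_R0. simpl. lra.
  - replace (n + S p)%nat with (S (n + p)) by lia.
    replace (it k eps (S (n + p)) r - it k eps n r) with
      ((it k eps (S (n + p)) r - it k eps (n + p) r) + (it k eps (n + p) r - it k eps n r)) by ring.
    eapply Rle_trans. apply Rabs_triang.
    assert (H1 := it_step (n + p) r). rewrite pow_add in H1.
    change ((/ 2) ^ (S p)) with (/ 2 * (/ 2) ^ p). set (x := (/ 2) ^ n) in *. set (y := (/ 2) ^ p) in *. set (z := exp (r ^ 2)) in *. replace (2 * x * (1 - / 2 * y) * z) with (x * y * z + 2 * x * (1 - y) * z) by (clear; field). lra.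
Qed.

Lemma it_cauchy' n p r : Rabs (it k eps (n + p) r - it k eps n r) <= 2 * (/ 2) ^ n * exp (r ^ 2).
Proof.
  eapply Rle_trans. apply it_cauchy.
  assert (0 < (/ 2) ^ p) by (apply pow_lt; lra). assert (0 < (/ 2) ^ n) by (apply pow_lt; lra).
  assert (Hz := exp_pos2 r). set (x := (/ 2) ^ n) in *. set (y := (/ 2) ^ p) in *. set (z := exp (r ^ 2)) in *. assert (0 < x * z) by nra. replace (2 * x * (1 - y) * z) with (2 * (x * z) - 2 * y * (x * z)) by (clear; ring). nra.
Qed.

Lemma half_small e : 0 < e -> exists N, forall n, (N <= n)%nat -> (/ 2) ^ n < e.
Proof.
  intros He'. destruct (pow_lt_1_zero (/ 2) ltac:(rewrite Rabs_right; lra) e He') as [N HN].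
  exists N. intros n Hn. specialize (HN n Hn). rewrite Rabs_right in HN. auto. apply Rle_ge, pow_le. lra.
Qed.

Definition ulim (r : R) : R := Lim_seq (fun n => it k eps n r).

Lemma ulim_correct r : is_lim_seq (fun n => it k eps n r) (ulim r).
Proof.
  apply Lim_seq_correct'. apply ex_lim_seq_cauchy_corr.
  intros e. 
  assert (Hc : 0 < e / (2 * exp (r ^ 2))) by (apply Rdiv_lt_0_compat; [apply cond_pos| assert (H := exp_pos2 r); lra]).
  destruct (half_small _ Hc) as [N HN]. exists N. intros n p Hn Hp.
  assert (Hpos := exp_pos2 r).
  assert (Hb : forall a b, (N <= a)%nat -> (a <= b)%nat -> Rabs (it k eps b r - it k eps a r) < e).
  { intros a b Ha Hab. replace b with (a + (b - a))%nat by lia.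
    eapply Rle_lt_trans. apply it_cauchy'.
    specialize (HN a Ha).
    apply Rmult_lt_compat_r with (r := 2 * exp (r ^ 2)) in HN. 2: lra.
    replace (e / (2 * exp (r ^ 2)) * (2 * exp (r ^ 2))) with (pos e) in HN by (field; lra). lra. }
  destruct (Nat.le_ge_cases n p).
  - rewrite Rabs_minus_sym. apply Hb; auto.
  - apply Hb; auto.
Qed.

Lemma ulim_bound n r : Rabs (ulim r - it k eps n r) <= 2 * (/ 2) ^ n * exp (r ^ 2).
Proof.
  assert (H := is_lim_seq_abs _ _ (is_lim_seq_minus' _ _ _ _ (ulim_correct r) (is_lim_seq_const (it k eps n r)))).
  assert (Hev : eventually (fun p => Rabs (it k eps p r - it k eps n r) <= 2 * (/ 2) ^ n * exp (r ^ 2))).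
  { exists n. intros p Hp. replace p with (n + (p - n))%nat by lia. apply it_cauchy'. }
  exact (is_lim_seq_le_loc _ _ _ _ Hev H (is_lim_seq_const (2 * (/ 2) ^ n * exp (r ^ 2)))).
Qed.

End Iter.

Lemma Q_even g r : contR g -> (forall t, g (- t) = g t) -> Q g (- r) = Q g r.
Proof. intros Hc He. rewrite Q_neg by auto. apply Q_ext. auto. Qed.

Lemma T_even k eps w : 0 < k -> contR w -> (forall t, w (- t) = w t) -> forall r, T k eps w (- r) = T k eps w r.
Proof.
  intros Hk Hc He.
  assert (HF : forall t, Ft k w (- t) = Ft k w t).
  { intros t. unfold Ft, m. rewrite He. replace ((- t) ^ 4) with (t ^ 4) by ring. reflexivity. }
  assert (HW : forall t, Wf k w (- t) = Wf k w t).
  { intros t. unfold Wf. rewrite Q_even; auto. apply contR_Ft; auto. }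
  assert (HV : forall t, Vf k eps w (- t) = Vf k eps w t).
  { intros t. unfold Vf. rewrite Q_even; auto. apply contR_Wf; auto. }
  intros r. unfold T. rewrite Q_even; auto. apply contR_Vf; auto.
Qed.

Section Lim.
Variables k eps : R.
Hypothesis Hk : 2 <= k.
Hypothesis He : 0 < eps < 1.

Lemma it_even n : forall t, it k eps n (- t) = it k eps n t.
Proof. induction n; intros t; simpl. auto. apply T_even; auto. lra. apply it_cont; auto. Qed.

Lemma ulim_even t : ulim k eps (- t) = ulim k eps t.
Proof. unfold ulim. f_equal. apply Lim_seq_ext. intros n. apply it_even. Qed.

Lemma ulim_cont : contR (ulim k eps).
Proof.
  intros x0. apply cont_ed. intros e Hep.
  set (R0 := Rabs x0 + 1). set (C := exp (R0 ^ 2)).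
  assert (HC : 0 < C) by apply exp_pos.
  destruct (half_small (e / 3 / (2 * C))) as [n Hn]. apply Rdiv_lt_0_compat; lra.
  specialize (Hn n (Nat.le_refl n)).
  assert (Hn' : 2 * (/ 2) ^ n * C < e / 3).
  { apply Rmult_lt_compat_r with (r := 2 * C) in Hn. 2: lra.
    replace (e / 3 / (2 * C) * (2 * C)) with (e / 3) in Hn by (field; lra). lra. }
  destruct (cont_to_ed _ x0 (it_cont k eps Hk n x0) (e / 3)) as [d [Hd Hd']]. lra.
  exists (Rmin 1 d). split. apply Rmin_pos; lra.
  intros y Hy.
  assert (Hy1 : Rabs (y - x0) < 1) by (eapply Rlt_le_trans; [apply Hy| apply Rmin_l]).
  assert (Hyd : Rabs (y - x0) < d) by (eapply Rlt_le_trans; [apply Hy| apply Rmin_r]).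
  assert (HyR : Rabs y <= R0).
  { unfold R0. replace y with (x0 + (y - x0)) by ring. eapply Rle_trans. apply Rabs_triang. lra. }
  assert (Hx0R : Rabs x0 <= R0) by (unfold R0; lra).
  assert (Eexp : forall z, Rabs z <= R0 -> exp (z ^ 2) <= C).
  { intros z Hz. unfold C. apply exp_le. rewrite <- (pow2_abs z). assert (0 <= Rabs z) by apply Rabs_pos. nra. }
  assert (B1 := ulim_bound k eps Hk He n y). assert (B2 := ulim_bound k eps Hk He n x0).
  assert (E1 := Eexp y HyR). assert (E2 := Eexp x0 Hx0R).
  assert (P := pow_lt (/ 2) n ltac:(lra)).
  assert (B1' : Rabs (ulim k eps y - it k eps n y) < e / 3).
  { eapply Rle_lt_trans. apply B1. eapply Rle_lt_trans. 2: apply Hn'. apply Rmult_le_compat_l; lra. }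
  assert (B2' : Rabs (ulim k eps x0 - it k eps n x0) < e / 3).
  { eapply Rle_lt_trans. apply B2. eapply Rle_lt_trans. 2: apply Hn'. apply Rmult_le_compat_l; lra. }
  specialize (Hd' y Hyd).
  replace (ulim k eps y - ulim k eps x0) with
    ((ulim k eps y - it k eps n y) + (it k eps n y - it k eps n x0) - (ulim k eps x0 - it k eps n x0)) by ring.
  replace ((ulim k eps y - it k eps n y) + (it k eps n y - it k eps n x0) - (ulim k eps x0 - it k eps n x0))
    with (((ulim k eps y - it k eps n y) + (it k eps n y - it k eps n x0)) + - (ulim k eps x0 - it k eps n x0)) by ring.
  assert (T1 := Rabs_triang ((ulim k eps y - it k eps n y) + (it k eps n y - it k eps n x0)) (- (ulim k eps x0 - it k eps n x0))).
  assert (T2 := Rabs_triang (ulim k eps y - it k eps n y) (it k eps n y - it k eps n x0)).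
  rewrite Rabs_Ropp in T1. lra.
Qed.

Lemma ulim_fix r : T k eps (ulim k eps) r = ulim k eps r.
Proof.
  assert (Hb : forall n, Rabs (T k eps (ulim k eps) r - ulim k eps r) <= 3 * (/ 2) ^ n * exp (r ^ 2)).
  { intros n.
    replace (T k eps (ulim k eps) r - ulim k eps r) with
      ((T k eps (ulim k eps) r - T k eps (it k eps n) r) - (ulim k eps r - it k eps (S n) r)) by (simpl; ring).
    eapply Rle_trans. unfold Rminus at 1. apply Rabs_triang.
    assert (H1 := T_lip k eps (ulim k eps) (it k eps n) (2 * (/ 2) ^ n) Hk ulim_cont (it_cont k eps Hk n)
       ltac:(assert (0 < (/2)^n) by (apply pow_lt; lra); lra) (ulim_bound k eps Hk He n) r).
    rewrite Rabs_Ropp. assert (H2 := ulim_bound k eps Hk He (S n) r). change ((/ 2) ^ (S n)) with (/ 2 * (/ 2) ^ n) in H2.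
    assert (0 < exp (r ^ 2)) by apply exp_pos. assert (0 < (/2)^n) by (apply pow_lt; lra).
    set (x := (/ 2) ^ n) in *. set (z := exp (r ^ 2)) in *. 
    assert (E : 2 * (/ 2 * x) * z = x * z) by (clear; field). rewrite E in H2.
    assert (E' : 2 * x * z / 2 = x * z) by (clear; field). rewrite E' in H1.
    assert (E'' : 3 * x * z = 3 * (x * z)) by (clear; ring). rewrite E''. change (it k eps (S n)) with (T k eps (it k eps n)) in *. assert (0 < x * z) by (clear - H H0; nra). lra. }
  destruct (Req_dec (T k eps (ulim k eps) r - ulim k eps r) 0). lra. exfalso.
  set (a := Rabs (T k eps (ulim k eps) r - ulim k eps r)) in *.
  assert (Ha : 0 < a) by (apply Rabs_pos_lt; auto).
  assert (Hz : 0 < exp (r ^ 2)) by apply exp_pos.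
  destruct (half_small (a / (3 * exp (r ^ 2)))) as [n Hn]. apply Rdiv_lt_0_compat; lra.
  specialize (Hn n (Nat.le_refl n)). specialize (Hb n).
  apply Rmult_lt_compat_r with (r := 3 * exp (r ^ 2)) in Hn. 2: lra.
  replace (a / (3 * exp (r ^ 2)) * (3 * exp (r ^ 2))) with a in Hn by (field; lra). 
  assert (E : (/ 2) ^ n * (3 * exp (r ^ 2)) = 3 * (/ 2) ^ n * exp (r ^ 2)) by ring. lra.
Qed.

End Lim.


Lemma m_ge_sq k t : 242 <= k -> 1 + t ^ 2 <= m k t.
Proof.
  intros Hk. unfold m. assert (0 <= (t ^ 2 - 240) ^ 2) by apply pow2_ge_0.
  replace (t ^ 4) with ((t ^ 2) ^ 2) by ring. nra.
Qed.

Lemma inv_m3_le_pl k t : 242 <= k -> / m k t ^ 3 <= pl t.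
Proof.
  intros Hk. unfold pl. assert (H := m_ge_sq k t Hk). assert (H1 := sq_pos t).
  assert (Hs : sqrt (1 + t ^ 2) <= 1 + t ^ 2).
  { rewrite <- (sqrt_square (1 + t ^ 2)) at 2 by lra. apply sqrt_le_1_alt. nra. }
  assert (Hs0 := sqrt_pos1 t).
  apply Rinv_le_contravar. apply Rmult_lt_0_compat; nra.
  apply Rle_trans with ((1 + t ^ 2) ^ 3).
  - replace ((1 + t ^ 2) ^ 3) with ((1 + t ^ 2) ^ 2 * (1 + t ^ 2)) by ring. apply Rmult_le_compat_l. apply pow_le; lra. exact Hs.
  - apply pow_incr. lra.
Qed.

Section Final.
Variables k eps : R.
Hypothesis Hk : 242 <= k.
Hypothesis He : 0 < eps < 1.

Let Hk2 : 2 <= k. Proof. lra. Qed.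
Let Hk0 : 0 < k. Proof. lra. Qed.

Definition uu := ulim k eps.

Lemma uu_cont : contR uu.
Proof. apply ulim_cont; auto. Qed.

Lemma uu_fix r : uu r = k + Q (Vf k eps uu) r.
Proof. symmetry. apply (ulim_fix k eps Hk2 He r). Qed.

Lemma uu_lower r : 0 <= r -> k - eps * r ^ 2 / 6 + r ^ 4 / 240 <= uu r.
Proof.
  intros Hr.
  assert (HG : forall t, - / 3 * (3 * pl t) <= Ft k uu t).
  { intros t. assert (H1 := Ft_bound k uu t Hk0). assert (H2 := inv_m3_le_pl k t Hk).
    apply Rabs_le_between in H1. lra. }
  assert (HW : forall t, 0 <= t -> 2 / 3 <= Wf k uu t).
  { intros t Ht. unfold Wf.
    assert (Q (fun t => - / 3 * (3 * pl t)) t <= Q (Ft k uu) t).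
    { apply Q_le; auto. apply contR_scal, contR_scal, contR_pl. apply contR_Ft; auto. apply uu_cont. }
    rewrite Q_scal in H by (apply contR_scal, contR_pl). assert (H' := Q_pl_le t). lra. }
  assert (HV : forall t, 0 <= t -> - eps + / 12 * t ^ 2 <= Vf k eps uu t).
  { intros t Ht. unfold Vf.
    assert (Q (fun _ => 1 / 2) t <= Q (Wf k uu) t).
    { apply Q_le; auto. apply contR_const. apply contR_Wf; auto. apply uu_cont.
      intros s Hs. specialize (HW s ltac:(lra)). lra. }
    rewrite Q_const in H. lra. }
  rewrite uu_fix.
  assert (Q (fun t => - eps + / 12 * t ^ 2) r <= Q (Vf k eps uu) r).
  { apply Q_le; auto. apply contR_poly. apply contR_Vf; auto. apply uu_cont.
    intros s Hs. apply HV. lra. }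
  rewrite Q_poly in H. lra.
Qed.

Lemma uu_ge_m t : m k t <= uu t.
Proof.
  assert (Hpos : forall t, 0 <= t -> m k t <= uu t).
  { intros s Hs. eapply Rle_trans. 2: apply uu_lower; auto. unfold m.
    assert (0 <= (s ^ 2 - 40 * eps) ^ 2) by apply pow2_ge_0.
    replace (s ^ 4) with ((s ^ 2) ^ 2) by ring. nra. }
  destruct (Rle_dec 0 t). apply Hpos; auto.
  assert (Hm : m k t = m k (- t)) by (unfold m; replace ((- t) ^ 4) with (t ^ 4) by ring; reflexivity).
  assert (Hu : uu t = uu (- t)) by (unfold uu; rewrite ulim_even; auto).
  rewrite Hm, Hu. apply Hpos. lra.
Qed.

Lemma uu_pos t : 0 < uu t.
Proof. assert (H := uu_ge_m t). assert (H' := m_pos k t Hk0). lra. Qed.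

Definition GG (t : R) : R := - / (uu t) ^ 3.

Lemma Ft_GG t : Ft k uu t = GG t.
Proof. unfold Ft, GG. rewrite Rmax_left. reflexivity. apply uu_ge_m. Qed.

Definition WW : R -> R := fun s => 1 + Q GG s.
Definition VV : R -> R := fun t => - eps + Q WW t.

Lemma uu_eq : uu = fun r => k + Q VV r.
Proof.
  apply functional_extensionality. intros r. rewrite uu_fix.
  rewrite (Q_ext (Vf k eps uu) VV). reflexivity.
  intros t. unfold Vf, VV. rewrite (Q_ext (Wf k uu) WW). reflexivity.
  intros s. unfold Wf, WW. rewrite (Q_ext (Ft k uu) GG). reflexivity.
  apply Ft_GG.
Qed.

Lemma contR_GG : contR GG.
Proof.
  intros x. apply (continuous_ext (Ft k uu)). apply Ft_GG. apply contR_Ft; auto. apply uu_cont.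
Qed.
Lemma contR_WW : contR WW.
Proof. apply contR_cQ, contR_GG. Qed.
Lemma contR_VV : contR VV.
Proof. apply contR_cQ, contR_WW. Qed.

Lemma uu_Cn n : Cn n uu.
Proof.
  induction n.
  - simpl. apply uu_cont.
  - assert (HG : Cn n GG).
    { apply Cn_ext with (f := fun t => (-1) * / (uu t * (uu t * uu t))).
      intros t. unfold GG. replace (uu t ^ 3) with (uu t * (uu t * uu t)) by ring. ring.
      apply Cn_mult. apply Cn_const. apply Cn_inv. apply Cn_mult. auto. apply Cn_mult; auto.
      intros t. assert (H := uu_pos t). apply Rgt_not_eq. apply Rmult_lt_0_compat. auto. nra. }
    assert (HW : Cn (S n) WW) by (apply Cn_cQ; auto).
    assert (HV : Cn (S (S n)) VV) by (apply Cn_cQ; auto).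
    assert (Hu : Cn (S (S (S n))) (fun r => k + Q VV r)) by (apply Cn_cQ; auto).
    rewrite <- uu_eq in Hu. apply Cn_S, Cn_S in Hu. exact Hu.
Qed.

Lemma uu_solution : entire_radial_solution k eps uu.
Proof.
  assert (L1 : lap uu = VV) by (rewrite uu_eq; apply lap_cQ_fun, contR_VV).
  assert (L2 : lap VV = WW) by (apply lap_cQ_fun, contR_WW).
  assert (L3 : lap WW = GG) by (apply lap_cQ_fun, contR_GG).
  split. { intros n x. apply Cn_smooth. apply uu_Cn. }
  split. { intros r. unfold uu. apply ulim_even; auto. }
  split. { intros r _. apply uu_pos. }
  split. { intros r _. rewrite L1, L2, L3. reflexivity. }
  split. { rewrite uu_eq. rewrite Q_0. ring. }
  split. { rewrite L1. unfold VV. rewrite Q_0. ring. }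
  split. { rewrite L1, L2. unfold WW. rewrite Q_0. ring. }
  split. { rewrite uu_eq. rewrite Derive_cQ by apply contR_VV. apply B_0. }
  split. { rewrite L1. unfold VV. rewrite Derive_cQ by apply contR_WW. apply B_0. }
  { rewrite L1, L2. unfold WW. rewrite Derive_cQ by apply contR_GG. apply B_0. }
Qed.

End Final.

Theorem lemma2 :
  exists k0 : R, 0 < k0 /\
    forall k : R, k0 <= k ->
      (forall eps : R, 0 < eps < 1 ->
         exists u : R -> R, entire_radial_solution k eps u) /\
      (forall (eps : R) (u : R -> R), entire_radial_solution k eps u ->
         eps <= sqrt (6 * k / 5) /\
         forall r : R, 0 < r ->
           k - eps / 6 * r ^ 2 <= u r /\
           u r <= k - eps / 6 * r ^ 2 + r ^ 4 / 120).
Proof.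
  exists 242. split. lra. intros k Hk. split.
  - intros eps He. exists (uu k eps). apply uu_solution; auto.
  - intros eps u H. apply part2, H.
Qed.
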